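(* Let $X$ be a Hausdorff Baire space which is developable and $\omega_1$-expandable. Then $dis(X) \geq \Delta(X)$.
   Context: All spaces are Hausdorff. $dis(X)$ denotes the least cardinal $\tau$ such that $X$ is the union of $\tau$ discrete subspaces. $\Delta(X)$ (the dispersion character of $X$) is the least cardinality of a non-empty open subset of $X$. For a collection $\mathcal{G}$ of subsets of $X$ and $x\in X$, $st(x,\mathcal{G})=\bigcup\{G\in\mathcal{G}: x\in G\}$ and $ord(x,\mathcal{G})=|\{G\in\mathcal{G}: x\in G\}|$. A sequence $\{\mathcal{G}_n:n\in\omega\}$ of open covers of $X$ is a development if $\{st(x,\mathcal{G}_n):n\in\omega\}$ is a local base at $x$ for every $x\in X$; $X$ is developable if it admits a development. For a cardinal $\kappa$, $X$ is $\kappa$-expandable if for every closed discrete set $D\subseteq X$ there is a family $\mathcal{G}=\{U_d: d\in D\}$ of open sets with $U_d\cap D=\{d\}$ for each $d\in D$ and $ord(x,\mathcal{G})\leq\kappa$ for every $x\in X$. *)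

(* Defs.v *)
From Stdlib Require Import Classical.

Definition set (T : Type) := T -> Prop.
Definition subset {T} (A B : set T) := forall x, A x -> B x.

Record topology (T : Type) := {
  is_open : set T -> Prop;
  open_full : is_open (fun _ => True);
  open_empty : is_open (fun _ => False);
  open_inter : forall A B, is_open A -> is_open B -> is_open (fun x => A x /\ B x);
  open_union : forall (F : set (set T)), (forall A, F A -> is_open A) ->
                 is_open (fun x => exists A, F A /\ A x)
}.
Arguments is_open {T} t A.

Section Topo.
Context {T : Type} (tau : topology T).

Definition is_closed (A : set T) := is_open tau (fun x => ~ A x).

Definition hausdorff := forall x y, x <> y ->
  exists U V, is_open tau U /\ is_open tau V /\ U x /\ V y /\
              (forall z, U z -> V z -> False).

Definition dense (A : set T) :=
  forall U, is_open tau U -> (exists x, U x) -> exists x, U x /\ A x.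

Definition baire := forall G : nat -> set T,
  (forall n, is_open tau (G n) /\ dense (G n)) ->
  dense (fun x => forall n, G n x).

Definition discrete (D : set T) :=
  forall d, D d -> exists U, is_open tau U /\ U d /\ (forall y, U y -> D y -> y = d).

Definition closed_discrete (D : set T) := is_closed D /\ discrete D.

Definition star (x : T) (G : set (set T)) : set T := fun y => exists A, G A /\ A x /\ A y.

Definition open_cover (G : set (set T)) :=
  (forall A, G A -> is_open tau A) /\ (forall x, exists A, G A /\ A x).

Definition development (G : nat -> set (set T)) :=
  (forall n, open_cover (G n)) /\
  (forall x U, is_open tau U -> U x -> exists n, subset (star x (G n)) U).

Definition developable := exists G, development G.

End Topo.

Definition countable {A : Type} (S : set A) :=
  exists f : {y : A | S y} -> nat, forall a b, f a = f b -> a = b.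

(* |S| <= omega_1: S admits a (strict) well-ordering all of whose proper
   initial segments are countable (i.e. its order type is <= omega_1). *)
Definition card_le_omega1 {A : Type} (S : set A) :=
  exists R : A -> A -> Prop,
    (forall x, S x -> ~ R x x) /\
    (forall x y z, S x -> S y -> S z -> R x y -> R y z -> R x z) /\
    (forall x y, S x -> S y -> x = y \/ R x y \/ R y x) /\
    (forall P : set A, (exists x, S x /\ P x) ->
        exists m, S m /\ P m /\ forall y, S y -> P y -> ~ R y m) /\
    (forall x, S x -> countable (fun y => S y /\ R y x)).

(* Since
   U_d ∩ D = {d}, the U_d are pairwise distinct, so ord(x,{U_d}) is the
   cardinality of {d in D | x in U_d}. *)
Definition omega1_expandable {T} (tau : topology T) :=
  forall D : set T, closed_discrete tau D ->
  exists U : T -> set T,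
    (forall d, D d -> is_open tau (U d) /\ U d d /\ (forall y, U d y -> D y -> y = d)) /\
    (forall x, card_le_omega1 (fun d => D d /\ U d x)).

(* Main.v *)
Require Import Defs.
From Stdlib Require Import Classical ClassicalEpsilon FunctionalExtensionality PropExtensionality ProofIrrelevance Arith Cantor.

Definition inj (X Y : Type) := exists f : X -> Y, forall a b, f a = f b -> a = b.

Lemma inj_refl X : inj X X.
Proof. exists (fun x => x); auto. Qed.

Lemma inj_trans X Y Z : inj X Y -> inj Y Z -> inj X Z.
Proof. intros [f Hf] [g Hg]. exists (fun x => g (f x)); auto. Qed.

Lemma inj_prod X X' Y Y' : inj X X' -> inj Y Y' -> inj (X*Y) (X'*Y').
Proof.
  intros [f Hf] [g Hg]. exists (fun p => (f (fst p), g (snd p))).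
  intros [a b] [c d] H; simpl in H. injection H; intros; f_equal; auto.
Qed.

Lemma inj_sum X X' Y Y' : inj X X' -> inj Y Y' -> inj (X+Y) (X'+Y').
Proof.
  intros [f Hf] [g Hg].
  exists (fun p => match p with inl a => inl (f a) | inr b => inr (g b) end).
  intros [a|a] [b|b] H; try discriminate; injection H; intros; f_equal; auto.
Qed.

Lemma inj_sigma X (P : X -> Type) Y : (forall x, inj (P x) Y) -> inj {x : X & P x} (X*Y).
Proof.
  intro H.
  exists (fun s => (projT1 s, proj1_sig (constructive_indefinite_description _ (H (projT1 s))) (projT2 s))).
  intros [x a] [y b] E; simpl in E. injection E; intros E2 E1. subst y.
  f_equal. apply (proj2_sig (constructive_indefinite_description _ (H x))). exact E2.
Qed.

Lemma sig_eq {A} (P : A -> Prop) (a b : {x | P x}) : proj1_sig a = proj1_sig b -> a = b.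
Proof. destruct a, b; simpl; intros; subst; f_equal; apply proof_irrelevance. Qed.

Lemma inj_sub A (P : A -> Prop) : inj {x | P x} A.
Proof. exists (@proj1_sig _ _). apply sig_eq. Qed.

Lemma set_ext {A} (B C : A -> Prop) : (forall x, B x -> C x) -> (forall x, C x -> B x) -> B = C.
Proof. intros; apply functional_extensionality; intro; apply propositional_extensionality; split; auto. Qed.

Section Zorn.
Variable P : Type.
Variable le : P -> P -> Prop.
Hypothesis le_refl : forall x, le x x.
Hypothesis le_trans : forall x y z, le x y -> le y z -> le x z.
Hypothesis chain_ub : forall C : P -> Prop, (forall x y, C x -> C y -> le x y \/ le y x) ->
  exists u, forall x, C x -> le x u.

Definition chain (C : P -> Prop) := forall x y, C x -> C y -> le x y \/ le y x.
Definition incl (A B : P -> Prop) := forall x, A x -> B x.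

Lemma zorn : exists m, forall y, le m y -> le y m.
Proof.
  apply NNPP; intro Hn.
  assert (Hs : forall m, exists y, le m y /\ ~ le y m).
  { intro m. apply NNPP; intro H. apply Hn. exists m. intros y Hy.
    apply NNPP; intro H2. apply H. eauto. }
  assert (HF : forall C : P -> Prop, exists p, chain C -> forall x, C x -> le x p /\ ~ le p x).
  { intro C. destruct (classic (chain C)) as [Hc|Hc].
    - destruct (chain_ub C Hc) as [u Hu]. destruct (Hs u) as [y [Hy1 Hy2]].
      exists y. intros _ x Hx. split; eauto.
    - destruct (chain_ub (fun _ => False)) as [u _]. { intros x y []. }
      exists u. intro; contradiction. }
  destruct (choice _ HF) as [F HFp].
  set (succ := fun (C : P -> Prop) x => C x \/ x = F C).
  set (union := fun (Fam : (P -> Prop) -> Prop) x => exists C, Fam C /\ C x).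
  set (tower := fun (Tw : (P -> Prop) -> Prop) =>
     (forall C, Tw C -> Tw (succ C)) /\ (forall Fam, (forall C, Fam C -> Tw C) -> Tw (union Fam))).
  set (M := fun C => forall Tw, tower Tw -> Tw C).
  assert (Mt : tower M).
  { split.
    - intros C HC Tw HT. apply (proj1 HT). apply HC; auto.
    - intros Fam HFam Tw HT. apply (proj2 HT). intros C HC. apply HFam; auto. }
  assert (Mind : forall Q : (P -> Prop) -> Prop,
     (forall C, M C -> Q C -> Q (succ C)) ->
     (forall Fam, (forall C, Fam C -> M C /\ Q C) -> Q (union Fam)) ->
     forall C, M C -> Q C).
  { intros Q H1 H2 C HC. refine (proj2 (HC (fun C => M C /\ Q C) _)).
    split.
    - intros D [HD1 HD2]. split; [apply (proj1 Mt); auto | auto].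
    - intros Fam HFam. split; [apply (proj2 Mt); intros; apply HFam; auto| auto]. }
  assert (L1 : forall C, M C -> (forall D, M D -> incl D C \/ incl C D) ->
             forall D, M D -> incl D C \/ incl (succ C) D).
  { intros C HC Hcomp. apply Mind.
    - intros D HD [H|H].
      + destruct (Hcomp (succ D) (proj1 Mt D HD)) as [H2|H2]; [left; auto|].
        destruct (classic (incl C D)) as [H3|H3].
        * assert (C = D) by (apply set_ext; auto). subst D.
          right. intros x Hx; exact Hx.
        * left. apply not_all_ex_not in H3. destruct H3 as [x Hx].
          apply imply_to_and in Hx. destruct Hx as [Hx1 Hx2].
          destruct (H2 x Hx1) as [Hx3|Hx3]; [contradiction|].
          subst x. intros y [Hy|Hy]; [auto| subst; auto].
      + right. intros x Hx. left. auto.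
    - intros Fam HFam.
      destruct (classic (exists D, Fam D /\ ~ incl D C)) as [[D [HD1 HD2]]|HN].
      + right. destruct (HFam D HD1) as [_ [H|H]]; [contradiction|].
        intros x Hx. exists D. auto.
      + left. intros x [D [HD Hx]]. apply NNPP; intro Hc. apply HN. exists D.
        split; auto; intro Hi; apply Hc; auto. }
  assert (L2 : forall C, M C -> forall D, M D -> incl D C \/ incl C D).
  { apply (Mind (fun C => forall D, M D -> incl D C \/ incl C D)).
    - intros C HC HQ D HD. destruct (L1 C HC HQ D HD) as [H|H].
      + left. intros x Hx. left. auto.
      + right. auto.
    - intros Fam HFam D HD.
      destruct (classic (exists C, Fam C /\ ~ incl C D)) as [[C [HC1 HC2]]|HN].
      + left. destruct (proj2 (HFam C HC1) D HD) as [H|H]; [|contradiction].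
        intros x Hx. exists C; auto.
      + right. intros x [C [HC Hx]]. apply NNPP; intro Hc. apply HN. exists C.
        split; auto; intro Hi; apply Hc; auto. }
  assert (L3 : forall C, M C -> chain C).
  { apply (Mind chain).
    - intros C HC Hch x y [Hx|Hx] [Hy|Hy].
      + auto.
      + subst y. left. apply (HFp C Hch x Hx).
      + subst x. right. apply (HFp C Hch y Hy).
      + subst. left. auto.
    - intros Fam HFam x y [C1 [HC1 Hx]] [C2 [HC2 Hy]].
      destruct (L2 C1 (proj1 (HFam C1 HC1)) C2 (proj1 (HFam C2 HC2))) as [H|H].
      + apply (proj2 (HFam C1 HC1)); auto.
      + apply (proj2 (HFam C2 HC2)); auto. }
  assert (HU : M (union M)) by (apply (proj2 Mt); auto).
  assert (HSU : M (succ (union M))) by (apply (proj1 Mt); auto).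
  assert (Hin : union M (F (union M))).
  { exists (succ (union M)). split; auto. right; auto. }
  destruct (HFp (union M) (L3 _ HU) _ Hin) as [_ H]. apply H. auto.
Qed.
End Zorn.

Lemma comparable (X Y : Type) : inj X Y \/ inj Y X.
Proof.
  set (good := fun R : X -> Y -> Prop =>
     (forall x y y', R x y -> R x y' -> y = y') /\ (forall x x' y, R x y -> R x' y -> x = x')).
  set (PP := {R | good R}).
  set (le := fun p q : PP => forall x y, proj1_sig p x y -> proj1_sig q x y).
  destruct (zorn PP le) as [m Hm].
  - intros p x y H; exact H.
  - intros p q r H1 H2 x y H; auto.
  - intros C HC.
    set (u := fun x y => exists p, C p /\ proj1_sig p x y).
    assert (Hg : good u).
    { split.
      + intros x y y' [p [Hp H1]] [q [Hq H2]].
        destruct (HC p q Hp Hq) as [H|H].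
        * apply (proj1 (proj2_sig q) x); auto.
        * apply (proj1 (proj2_sig p) x); auto.
      + intros x x' y [p [Hp H1]] [q [Hq H2]].
        destruct (HC p q Hp Hq) as [H|H].
        * apply (proj2 (proj2_sig q) x x' y); auto.
        * apply (proj2 (proj2_sig p) x x' y); auto. }
    exists (exist _ u Hg). intros p Hp x y H. exists p. auto.
  - destruct m as [R [Hf Hi]]. simpl in Hm.
    destruct (classic (forall x, exists y, R x y)) as [Ht|Ht].
    + left. destruct (choice _ Ht) as [f Hfx]. exists f. intros a b E.
      apply (Hi a b (f a)); auto. rewrite E; auto.
    + apply not_all_ex_not in Ht. destruct Ht as [x1 Hx1].
      destruct (classic (forall y, exists x, R x y)) as [Hs|Hs].
      * right. destruct (choice _ Hs) as [g Hg]. exists g. intros a b E.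
        apply (Hf (g a)); auto. rewrite E; auto.
      * exfalso. apply not_all_ex_not in Hs. destruct Hs as [y0 Hy0].
        set (R' := fun x y => R x y \/ (x = x1 /\ y = y0)).
        assert (Hg : good R').
        { split.
          - intros x y y' [H1|[H1 H2]] [H3|[H3 H4]]; subst; eauto.
            + exfalso; apply Hx1; eauto.
            + exfalso; apply Hx1; eauto.
          - intros x x' y [H1|[H1 H2]] [H3|[H3 H4]]; subst; eauto.
            + exfalso; apply Hy0; eauto.
            + exfalso; apply Hy0; eauto. }
        assert (H := Hm (exist _ R' Hg)). simpl in H.
        assert (H2 : R x1 y0).
        { apply H. - intros x y Hxy; left; auto. - right; auto. }
        apply Hx1; eauto.
Qed.

Lemma cantor_inj n m n' m' : Cantor.to_nat (n,m) = Cantor.to_nat (n',m') -> n = n' /\ m = m'.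
Proof.
  intro H. assert (H2 := f_equal Cantor.of_nat H). rewrite !Cantor.cancel_of_to in H2.
  injection H2; auto.
Qed.

Lemma inj_natnat : inj (nat*nat) nat.
Proof. exists Cantor.to_nat. intros [a b] [c d] H. apply cantor_inj in H. destruct H; subst; auto. Qed.

Lemma inj_sum_self Z : inj nat Z -> inj (Z*Z) Z -> inj (Z+Z) Z.
Proof.
  intros [e He] [g Hg].
  exists (fun p => match p with inl z => g (z, e 0) | inr z => g (z, e 1) end).
  intros [a|a] [b|b] H; apply Hg in H.
  - injection H; intros; subst; auto.
  - injection H; intros H1 H2. apply He in H1. discriminate.
  - injection H; intros H1 H2. apply He in H1. discriminate.
  - injection H; intros; subst; auto.
Qed.

Lemma inf_square (A : Type) : inj nat A -> inj (A*A) A.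
Proof.
  intros [e He].
  set (N0 := fun x => exists n, x = e n).
  set (R0 := fun x y z => exists n m, x = e n /\ y = e m /\ z = e (Cantor.to_nat (n,m))).
  set (good := fun (S : A -> Prop) (R : A -> A -> A -> Prop) =>
   (forall x, N0 x -> S x) /\ (forall x y z, R0 x y z -> R x y z) /\
   (forall x y, S x -> S y -> exists z, R x y z) /\
   (forall x y z, R x y z -> S x /\ S y /\ S z) /\
   (forall x y z z', R x y z -> R x y z' -> z = z') /\
   (forall x y x' y' z, R x y z -> R x' y' z -> x = x' /\ y = y')).
  set (PP := {p : (A -> Prop) * (A -> A -> A -> Prop) | good (fst p) (snd p)}).
  set (le := fun p q : PP => (forall x, fst (proj1_sig p) x -> fst (proj1_sig q) x) /\
                            (forall x y z, snd (proj1_sig p) x y z -> snd (proj1_sig q) x y z)).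
  assert (g0 : good N0 R0).
  { split; [|split; [|split; [|split; [|split]]]].
    - auto.
    - auto.
    - intros x y [n Hn] [m Hm]. exists (e (Cantor.to_nat (n,m))). exists n, m; auto.
    - intros x y z [n [m [H1 [H2 H3]]]]. split; [exists n|split; [exists m|exists (Cantor.to_nat (n,m))]]; auto.
    - intros x y z z' [n [m [H1 [H2 H3]]]] [n' [m' [H1' [H2' H3']]]]. subst.
      apply He in H1'. apply He in H2'. subst; auto.
    - intros x y x' y' z [n [m [H1 [H2 H3]]]] [n' [m' [H1' [H2' H3']]]]. subst.
      apply He in H3'. apply cantor_inj in H3'. destruct H3'; subst; auto. }
  set (p0 := exist (fun p => good (fst p) (snd p)) (N0, R0) g0 : PP).
  assert (Hp0 : forall p : PP, le p0 p).
  { intros p. destruct (proj2_sig p) as [G1 [G2 _]]. split; simpl; intros; auto. }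
  destruct (zorn PP le) as [m Hm].
  - intros p; split; auto.
  - intros p q r [H1 H2] [H3 H4]; split; auto.
  - intros C HC.
    set (C' := fun p => C p \/ p = p0).
    assert (HC' : forall p q, C' p -> C' q -> le p q \/ le q p).
    { intros p q [Hp|Hp] [Hq|Hq]; subst; auto. }
    set (Su := fun x => exists p, C' p /\ fst (proj1_sig p) x).
    set (Ru := fun x y z => exists p, C' p /\ snd (proj1_sig p) x y z).
    assert (Hg : good Su Ru).
    { split; [|split; [|split; [|split; [|split]]]].
      - intros x Hx. exists p0. split; [right; auto| simpl; auto].
      - intros x y z Hx. exists p0. split; [right; auto| simpl; auto].
      - intros x y [p [Hp Hx]] [q [Hq Hy]].
        destruct (HC' p q Hp Hq) as [[H1 H2]|[H1 H2]].
        + destruct (proj2_sig q) as [_ [_ [G3 _]]].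
          destruct (G3 x y) as [z Hz]; auto. exists z, q; auto.
        + destruct (proj2_sig p) as [_ [_ [G3 _]]].
          destruct (G3 x y) as [z Hz]; auto. exists z, p; auto.
      - intros x y z [p [Hp H]]. destruct (proj2_sig p) as [_ [_ [_ [G4 _]]]].
        destruct (G4 x y z H) as [A1 [A2 A3]].
        split; [|split]; exists p; split; auto.
      - intros x y z z' [p [Hp H]] [q [Hq H']].
        destruct (HC' p q Hp Hq) as [[H1 H2]|[H1 H2]].
        + destruct (proj2_sig q) as [_ [_ [_ [_ [G5 _]]]]]. eauto.
        + destruct (proj2_sig p) as [_ [_ [_ [_ [G5 _]]]]]. eauto.
      - intros x y x' y' z [p [Hp H]] [q [Hq H']].
        destruct (HC' p q Hp Hq) as [[H1 H2]|[H1 H2]].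
        + destruct (proj2_sig q) as [_ [_ [_ [_ [_ G6]]]]]. eapply G6; eauto.
        + destruct (proj2_sig p) as [_ [_ [_ [_ [_ G6]]]]]. eapply G6; eauto. }
    exists (exist _ (Su, Ru) Hg). intros p Hp. split; simpl.
    + intros x Hx. exists p. split; [left|]; auto.
    + intros x y z Hx. exists p. split; [left|]; auto.
  - destruct m as [[S R] Hgood]. simpl in Hm.
    destruct Hgood as [G1 [G2 [G3 [G4 [G5 G6]]]]]; simpl in G1, G2, G3, G4, G5, G6.
    set (SS := {x | S x}).
    assert (HSS : inj (SS*SS) SS).
    { assert (Ht : forall p : SS*SS, exists z : SS, R (proj1_sig (fst p)) (proj1_sig (snd p)) (proj1_sig z)).
      { intros [[x Hx] [y Hy]]. simpl. destruct (G3 x y Hx Hy) as [z Hz].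
        exists (exist _ z (proj2 (proj2 (G4 _ _ _ Hz)))). simpl; auto. }
      destruct (choice _ Ht) as [f Hf]. exists f.
      intros [a b] [c d] E. assert (H1 := Hf (a,b)). assert (H2 := Hf (c,d)).
      rewrite E in H1. simpl in H1, H2. destruct (G6 _ _ _ _ _ H1 H2).
      f_equal; apply sig_eq; auto. }
    assert (HnS : inj nat SS).
    { exists (fun n => exist S (e n) (G1 _ (ex_intro _ n eq_refl))).
      intros a b H. apply He. apply (f_equal (@proj1_sig _ _)) in H. exact H. }
    assert (H2S : inj (SS+SS) SS) by (apply inj_sum_self; auto).
    destruct (comparable {x | ~ S x} SS) as [[h Hh]|[h Hh]].
    +
      assert (HA : inj A (SS+SS)).
      { exists (fun a => match excluded_middle_informative (S a) with
                         | left p => inl (exist _ a p)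
                         | right q => inr (h (exist _ a q)) end).
        intros a b.
        destruct (excluded_middle_informative (S a)); destruct (excluded_middle_informative (S b));
          intro E; try discriminate; injection E; intro E'.
        - exact E'.
        - apply Hh in E'. apply (f_equal (@proj1_sig _ _)) in E'. exact E'. }
      apply (inj_trans _ (SS*SS)).
      * apply inj_prod; apply (inj_trans _ (SS+SS)); auto.
      * apply (inj_trans _ SS); auto. apply inj_sub.
    + exfalso.
      set (T := fun x => exists s, proj1_sig (h s) = x).
      set (S' := fun x => S x \/ T x).
      assert (HS'2 : inj {x | S' x} (SS+SS)).
      { assert (Hc : forall q : {x | S' x}, ~ S (proj1_sig q) -> exists s, proj1_sig (h s) = proj1_sig q).
        { intros [x [Hx|Hx]] Hn; simpl in *; [contradiction| auto]. }
        exists (fun q => match excluded_middle_informative (S (proj1_sig q)) with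
                         | left p => inl (exist _ (proj1_sig q) p)
                         | right n => inr (proj1_sig (constructive_indefinite_description _ (Hc q n))) end).
        intros a b.
        destruct (excluded_middle_informative (S (proj1_sig a)));
        destruct (excluded_middle_informative (S (proj1_sig b)));
          intro E; try discriminate; injection E; intro E'.
        - apply sig_eq. exact E'.
        - apply sig_eq.
          destruct (constructive_indefinite_description _ (Hc a n)) as [sa Ha].
          destruct (constructive_indefinite_description _ (Hc b n0)) as [sb Hb].
          simpl in E'. subst. rewrite <- Ha, <- Hb. reflexivity. }
      set (Q := {xy : A*A | S' (fst xy) /\ S' (snd xy) /\ ~ (S (fst xy) /\ S (snd xy))}).
      assert (HQ : inj Q SS).
      { apply (inj_trans _ ({x | S' x} * {x | S' x})).
        - exists (fun q => (exist S' (fst (proj1_sig q)) (proj1 (proj2_sig q)),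
                            exist S' (snd (proj1_sig q)) (proj1 (proj2 (proj2_sig q))))).
          intros [[a b] Ha] [[c d] Hc] E. injection E; intros. apply sig_eq; simpl. subst; auto.
        - apply (inj_trans _ (SS*SS)); auto.
          apply inj_prod; apply (inj_trans _ (SS+SS)); auto. }
      destruct HQ as [kk0 Hkk0].
      set (kk := fun q => proj1_sig (h (kk0 q))).
      assert (Hkk : forall q q', kk q = kk q' -> q = q').
      { intros q q' E. apply Hkk0. apply Hh. apply sig_eq. exact E. }
      assert (HkT : forall q, T (kk q)) by (intro q; exists (kk0 q); auto).
      assert (HkS : forall q, ~ S (kk q)) by (intro q; exact (proj2_sig (h (kk0 q)))).
      set (R' := fun x y z => R x y z \/ exists q : Q, proj1_sig q = (x,y) /\ z = kk q).
      assert (Hg : good S' R').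
      { split; [|split; [|split; [|split; [|split]]]].
        - intros x Hx; left; auto.
        - intros x y z Hx; left; auto.
        - intros x y Hx Hy. destruct (classic (S x /\ S y)) as [[H1 H2]|H].
          + destruct (G3 x y H1 H2) as [z Hz]. exists z; left; auto.
          + pose (q := exist (fun xy : A*A => S' (fst xy) /\ S' (snd xy) /\ ~ (S (fst xy) /\ S (snd xy))) (x,y) (conj Hx (conj Hy H)) : Q).
            exists (kk q). right. exists q. split; reflexivity.
        - intros x y z [H|[q [Hq Hz]]].
          + destruct (G4 _ _ _ H) as [A1 [A2 A3]]. split; [|split]; left; auto.
          + destruct (proj2_sig q) as [Ha [Hb _]]. rewrite Hq in Ha, Hb. simpl in Ha, Hb.
            subst z. split; [|split]; auto. right. apply HkT.
        - intros x y z z' [H|[q [Hq Hz]]] [H'|[q' [Hq' Hz']]].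
          + eauto.
          + exfalso. destruct (proj2_sig q') as [_ [_ Hn]]. rewrite Hq' in Hn. simpl in Hn.
            apply Hn. destruct (G4 _ _ _ H) as [? [? _]]; auto.
          + exfalso. destruct (proj2_sig q) as [_ [_ Hn]]. rewrite Hq in Hn. simpl in Hn.
            apply Hn. destruct (G4 _ _ _ H') as [? [? _]]; auto.
          + subst. f_equal. apply sig_eq. rewrite Hq, Hq'. auto.
        - intros x y x' y' z [H|[q [Hq Hz]]] [H'|[q' [Hq' Hz']]].
          + eapply G6; eauto.
          + exfalso. subst. apply (HkS q'). apply (G4 _ _ _ H).
          + exfalso. subst. apply (HkS q). apply (G4 _ _ _ H').
          + subst. apply Hkk in Hz'. subst. rewrite Hq in Hq'. injection Hq'; auto. }
      assert (Hle := Hm (exist _ (S', R') Hg)). simpl in Hle.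
      destruct Hle as [Hle1 _].
      * split; simpl; intros; left; auto.
      * set (s0 := exist S (e 0) (G1 _ (ex_intro _ 0 eq_refl)) : SS).
        apply (proj2_sig (h s0)). apply Hle1. right. exists s0. auto.
Qed.

Lemma inj_Inat (I : Type) : inj nat I -> inj (I*nat) I.
Proof.
  intro H. apply (inj_trans _ (I*I)); [apply inj_prod; auto; apply inj_refl| apply inf_square; auto].
Qed.

Lemma omega1_inj (I A : Type) (S : set A) : card_le_omega1 S -> ~ inj I nat -> inj nat I ->
  inj {x | S x} I.
Proof.
  intros [R [_ [_ [Htri [_ Hcnt]]]]] HnI HI.
  destruct (comparable {x | S x} I) as [H|[g Hg]]; auto.
  assert (Hb : forall x : {x | S x}, exists b : I,
     proj1_sig (g b) = proj1_sig x \/ R (proj1_sig x) (proj1_sig (g b))).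
  { intro x. apply NNPP; intro Hn. apply HnI.
    assert (Hseg : forall i, S (proj1_sig (g i)) /\ R (proj1_sig (g i)) (proj1_sig x)).
    { intro i. split; [exact (proj2_sig (g i))|].
      destruct (Htri (proj1_sig (g i)) (proj1_sig x) (proj2_sig (g i)) (proj2_sig x)) as [E|[E|E]]; auto;
       exfalso; apply Hn; exists i; auto. }
    destruct (Hcnt (proj1_sig x) (proj2_sig x)) as [f Hf].
    exists (fun i => f (exist _ (proj1_sig (g i)) (Hseg i))).
    intros a b E. apply Hf in E. apply (f_equal (@proj1_sig _ _)) in E. simpl in E.
    apply Hg. apply sig_eq. exact E. }
  destruct (choice _ Hb) as [bf Hbf].
  set (P := fun b : I => {y : A | y = proj1_sig (g b) \/ (S y /\ R y (proj1_sig (g b)))}).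
  assert (HP : forall b, inj (P b) nat).
  { intro b. destruct (Hcnt (proj1_sig (g b)) (proj2_sig (g b))) as [f Hf].
    assert (Hq : forall y : P b, proj1_sig y <> proj1_sig (g b) -> S (proj1_sig y) /\ R (proj1_sig y) (proj1_sig (g b))).
    { intros [y [Hy|Hy]] Hn; simpl in *; [contradiction|auto]. }
    exists (fun y => match excluded_middle_informative (proj1_sig y = proj1_sig (g b)) with
                     | left _ => 0
                     | right n => Datatypes.S (f (exist _ (proj1_sig y) (Hq y n))) end).
    intros y1 y2.
    destruct (excluded_middle_informative (proj1_sig y1 = proj1_sig (g b)));
    destruct (excluded_middle_informative (proj1_sig y2 = proj1_sig (g b))); intro E;
      try discriminate.
    - apply sig_eq. congruence.
    - injection E; intro E'. apply Hf in E'. apply (f_equal (@proj1_sig _ _)) in E'. simpl in E'.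
      apply sig_eq. exact E'. }
  assert (Hx : forall x : {x | S x}, proj1_sig x = proj1_sig (g (bf x)) \/
               (S (proj1_sig x) /\ R (proj1_sig x) (proj1_sig (g (bf x))))).
  { intro x. destruct (Hbf x) as [E|E]; [left; auto| right; split; auto; exact (proj2_sig x)]. }
  apply (inj_trans _ {b : I & P b}).
  - exists (fun x => existT P (bf x) (exist _ (proj1_sig x) (Hx x))).
    intros a b E. apply (f_equal (fun s : {b : I & P b} => proj1_sig (projT2 s))) in E. simpl in E.
    apply sig_eq. exact E.
  - apply (inj_trans _ (I*nat)). + apply inj_sigma. exact HP.
    + apply inj_Inat; auto.
Qed.

Section Top.
Context {T : Type} (tau : topology T).

Lemma open_local (C : set T) :
  (forall x, C x -> exists V, is_open tau V /\ V x /\ subset V C) -> is_open tau C.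
Proof.
  intro H.
  assert (E : (fun x => exists A, (fun V => is_open tau V /\ subset V C) A /\ A x) = C).
  { apply set_ext.
    - intros x [A [[_ HA] Hx]]. auto.
    - intros x Hx. destruct (H x Hx) as [V [HV [Vx HVC]]]. exists V. auto. }
  rewrite <- E. apply open_union. intros A [HA _]; auto.
Qed.

Lemma star_open (Gn : set (set T)) x : open_cover tau Gn -> is_open tau (star x Gn).
Proof.
  intros [Ho _]. apply open_local. intros y [A [HA [Ax Ay]]].
  exists A. split; [auto|split; auto]. intros z Hz. exists A; auto.
Qed.

Lemma star_self (Gn : set (set T)) x : open_cover tau Gn -> star x Gn x.
Proof. intros [_ Hc]. destruct (Hc x) as [A [HA Ax]]. exists A; auto. Qed.

Lemma star_sym (Gn : set (set T)) x y : star x Gn y -> star y Gn x.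
Proof. intros [A [H1 [H2 H3]]]. exists A; auto. Qed.

Definition Ed (D : set T) (Gn : set (set T)) : set T :=
  fun d => D d /\ forall y, star d Gn y -> D y -> y = d.

Lemma Ed_cd (D : set T) (Gn : set (set T)) :
  hausdorff tau -> open_cover tau Gn -> closed_discrete tau (Ed D Gn).
Proof.
  intros Hh Hc.
  assert (Key : forall x, exists A, Gn A /\ A x /\ is_open tau A /\
     forall d d', A d -> A d' -> Ed D Gn d -> Ed D Gn d' -> d = d').
  { intro x. destruct (proj2 Hc x) as [A [HA Ax]]. exists A.
    split; [auto|split; [auto|split; [apply (proj1 Hc); auto|]]].
    intros d d' Ad Ad' [Dd Hd] [Dd' Hd']. apply Hd'; auto. exists A; auto. }
  split.
  - unfold is_closed. apply open_local. intros x Hx.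
    destruct (Key x) as [A [HA [Ax [Ao HAk]]]].
    destruct (classic (exists d, A d /\ Ed D Gn d)) as [[d [Ad Hd]]|Hn].
    + assert (Hxd : x <> d) by (intro; subst; contradiction).
      destruct (Hh x d Hxd) as [U [V [Uo [Vo [Ux [Vd Hdisj]]]]]].
      exists (fun y => A y /\ U y). split; [apply open_inter; auto|split; [auto|]].
      intros y [Ay Uy] Hy. assert (y = d) by (apply HAk; auto). subst. eauto.
    + exists A. split; [auto|split; [auto|]]. intros y Ay Hy. apply Hn. eauto.
  - intros d Hd. destruct (Key d) as [A [HA [Ad [Ao HAk]]]].
    exists A. split; [auto|split; [auto|]]. intros y Ay Hy. apply HAk; auto.
Qed.

Lemma Ed_cover (D : set T) (G : nat -> set (set T)) d :
  discrete tau D -> development tau G -> D d -> exists n, Ed D (G n) d.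
Proof.
  intros Hd [_ HG] Dd. destruct (Hd d Dd) as [U [Uo [Ud HU]]].
  destruct (HG d U Uo Ud) as [n Hn]. exists n. split; auto.
Qed.

Definition dense_in (V M : set T) :=
  forall O, is_open tau O -> (exists x, O x /\ V x) -> exists x, O x /\ V x /\ M x.

Lemma baire_cover (x0 : T) : baire tau -> forall Mf : nat -> set T, (forall x, exists n, Mf n x) ->
  exists n V, is_open tau V /\ (exists x, V x) /\ dense_in V (Mf n).
Proof.
  intros Hb Mf Hcov. apply NNPP; intro Hn.
  set (Gk := fun n x => exists O, is_open tau O /\ O x /\ forall y, O y -> ~ Mf n y).
  assert (HG : forall n, is_open tau (Gk n) /\ dense tau (Gk n)).
  { intro n. split.
    - apply open_local. intros x [O [Oo [Ox HO]]]. exists O. split; [auto|split; [auto|]].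
      intros y Oy. exists O; auto.
    - intros U Uo [u Uu]. apply NNPP; intro Hn2. apply Hn. exists n, U.
      split; [auto|split; [eauto|]]. intros O Oo [x [Ox Ux]].
      apply NNPP; intro Hn3. apply Hn2. exists x. split; auto.
      exists (fun y => O y /\ U y). split; [apply open_inter; auto|split; [auto|]].
      intros y [Oy Uy] My. apply Hn3. exists y; auto. }
  destruct (Hb Gk HG (fun _ => True) (open_full _ tau) (ex_intro _ x0 I)) as [x [_ Hx]].
  destruct (Hcov x) as [n Hnx]. destruct (Hx n) as [O [_ [Ox HO]]]. apply (HO x); auto.
Qed.

End Top.

Theorem theorem1 (T : Type) (tau : topology T) (x0 : T) :
  hausdorff tau -> baire tau -> developable tau -> omega1_expandable tau ->
  forall (I : Type) (D : I -> set T),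
    (forall i, discrete tau (D i)) ->
    (forall x, exists i, D i x) ->
    exists U : set T, is_open tau U /\ (exists x, U x) /\
      exists f : {x : T | U x} -> I, forall a b, f a = f b -> a = b.
Proof.
  intros Hh Hb [G HG] Hexp I D Hdisc Hcov.
  set (E := fun i n => Ed (D i) (G n)).
  assert (HCD : forall i n, closed_discrete tau (E i n)).
  { intros i n. apply Ed_cd; auto. apply (proj1 HG). }
  assert (HEc : forall x, exists i n, E i n x).
  { intro x. destruct (Hcov x) as [i Hi]. destruct (Ed_cover tau (D i) G x (Hdisc i) HG Hi) as [n Hn].
    exists i, n. exact Hn. }
  destruct (classic (inj I nat)) as [[enc Henc]|HnI].
  - set (Mf := fun l x => exists i m, Cantor.of_nat l = (enc i, m) /\ E i m x).
    destruct (baire_cover tau x0 Hb Mf) as [l [V [Vo [[v Vv] HV]]]].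
    { intro x. destruct (HEc x) as [i [m H]]. exists (Cantor.to_nat (enc i, m)).
      exists i, m. rewrite Cantor.cancel_of_to. auto. }
    destruct (HV V Vo (ex_intro _ v (conj Vv Vv))) as [y [_ [Vy [i [m [Hl Ey]]]]]].
    assert (HVE : forall z, V z -> E i m z).
    { intros z Vz. apply NNPP; intro Hz.
      destruct (HV _ (proj1 (HCD i m)) (ex_intro _ z (conj Hz Vz))) as [w [Hw [Vw [i' [m' [Hl' Ew]]]]]].
      rewrite Hl in Hl'. injection Hl'; intros; subst. apply Henc in H0. subst. contradiction. }
    destruct (proj2 (HCD i m) y Ey) as [U [Uo [Uy HU]]].
    exists (fun z => U z /\ V z). split; [apply open_inter; auto|split; [exists y; auto|]].
    exists (fun _ => i). intros [a [Ua Va]] [b [Ub Vb]] _. apply sig_eq; simpl.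
    rewrite (HU a Ua (HVE a Va)), (HU b Ub (HVE b Vb)). reflexivity.
  - assert (HnatI : inj nat I).
    { destruct (comparable I nat); auto. contradiction. }
    assert (HII : inj (I*I) I) by (apply inf_square; auto).
    assert (Hex : forall p : I * nat, exists U : T -> set T,
      (forall d, E (fst p) (snd p) d -> is_open tau (U d) /\ U d d /\ (forall y, U d y -> E (fst p) (snd p) y -> y = d)) /\
      (forall x, card_le_omega1 (fun d => E (fst p) (snd p) d /\ U d x))).
    { intro p. apply Hexp. apply HCD. }
    destruct (choice _ Hex) as [Uf HUf].
    set (F := fun i m k d => E i m d /\ subset (star d (G k)) (Uf (i,m) d)).
    set (Mf := fun l x => exists i m k, Cantor.of_nat l = (m, k) /\ F i m k x).
    assert (HFc : forall x, exists i m k, F i m k x).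
    { intro x. destruct (HEc x) as [i [m Hx]].
      destruct (proj1 (HUf (i,m)) x Hx) as [Uo [Ux _]].
      destruct (proj2 HG x _ Uo Ux) as [k Hk]. exists i, m, k. split; auto. }
    destruct (baire_cover tau x0 Hb Mf) as [l [V [Vo [[x Vx] HV]]]].
    { intro y. destruct (HFc y) as [i [m [k H]]]. exists (Cantor.to_nat (m, k)).
      exists i, m, k. rewrite Cantor.cancel_of_to. auto. }
    destruct (Cantor.of_nat l) as [m k] eqn:Hl.
    set (W := fun y => V y /\ star y (G k) x).
    assert (Wo : is_open tau W).
    { assert (E1 : W = (fun y => V y /\ star x (G k) y)).
      { apply set_ext; intros y [H1 H2]; split; auto; apply star_sym; auto. }
      rewrite E1. apply open_inter; auto. apply (star_open tau). apply (proj1 HG). }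
    assert (Wx : W x) by (split; auto; apply (star_self tau); apply (proj1 HG)).
    set (S := fun y => W y /\ Mf l y).
    assert (HSd : forall O, is_open tau O -> (exists y, O y /\ W y) -> exists y, O y /\ S y).
    { intros O Oo [y [Oy [Vy Sy]]].
      destruct (HV (fun z => O z /\ star x (G k) z)) as [z [[Oz Sz] [Vz Mz]]].
      - apply open_inter; auto. apply (star_open tau). apply (proj1 HG).
      - exists y. split; auto. split; auto. apply star_sym; auto.
      - exists z. split; auto. split; auto. split; auto. apply star_sym; auto. }
    assert (HS : inj {y | S y} I).
    { assert (Hi : forall y : {y | S y}, exists i, E i m (proj1_sig y) /\ Uf (i,m) (proj1_sig y) x).
      { intros [y [[Vy Sy] [i [m' [k' [Hl' [Ey Hsub]]]]]]]. simpl.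
        rewrite Hl in Hl'. injection Hl'; intros; subst. exists i. split; auto. }
      destruct (choice _ Hi) as [fi Hfi].
      set (P := fun i => {d | E i m d /\ Uf (i,m) d x}).
      apply (inj_trans _ {i : I & P i}).
      - exists (fun y => existT P (fi y) (exist _ (proj1_sig y) (Hfi y))).
        intros a b Eq. apply (f_equal (fun s : {i : I & P i} => proj1_sig (projT2 s))) in Eq.
        apply sig_eq. exact Eq.
      - apply (inj_trans _ (I*I)); auto. apply inj_sigma. intro i.
        apply (omega1_inj I T (fun d => E i m d /\ Uf (i,m) d x)); auto.
        exact (proj2 (HUf (i,m)) x). }
    exists W. split; [auto|split; [exists x; auto|]].
    assert (Hw : forall w : {w | W w}, exists p : (I*nat) * {y | S y},
       E (fst (fst p)) (snd (fst p)) (proj1_sig w) /\ Uf (fst p) (proj1_sig w) (proj1_sig (snd p))).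
    { intros [w Ww]. simpl. destruct (HEc w) as [i [m' Hw]].
      destruct (proj1 (HUf (i,m')) w Hw) as [Uo [Uw _]].
      destruct (HSd _ Uo (ex_intro _ w (conj Uw Ww))) as [s [Us Ss]].
      exists ((i,m'), exist _ s Ss). simpl. auto. }
    destruct (choice _ Hw) as [fp Hfp].
    set (P := fun p : (I*nat) * {y | S y} =>
       {d | E (fst (fst p)) (snd (fst p)) d /\ Uf (fst p) d (proj1_sig (snd p))}).
    cut (inj {w | W w} I). { auto. }
    apply (inj_trans _ {p : (I*nat) * {y | S y} & P p}).
    + exists (fun w => existT P (fp w) (exist _ (proj1_sig w) (Hfp w))).
      intros a b Eq. apply (f_equal (fun s : {p : (I*nat) * {y | S y} & P p} => proj1_sig (projT2 s))) in Eq.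
      apply sig_eq. exact Eq.
    + apply (inj_trans _ (((I*nat) * {y | S y}) * I)).
      * apply inj_sigma. intros [[i m'] s]. simpl.
        apply (omega1_inj I T (fun d => E i m' d /\ Uf (i,m') d (proj1_sig s))); auto.
        exact (proj2 (HUf (i,m')) (proj1_sig s)).
      * apply (inj_trans _ (I*I)); auto. apply inj_prod; [|apply inj_refl].
        apply (inj_trans _ (I*I)); auto. apply inj_prod; auto.
        apply inj_Inat; auto.
Qed.
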